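(* Let $f:\mathbb{R}^n\to(-\infty,+\infty]$ be proper, lower semicontinuous and prox-bounded with threshold $\lambda_f>0$, let $0<\lambda<\lambda_f$ and let $x\in\operatorname{dom}f$. Then the following are equivalent: (a) $\partial_p^\lambda f(x)\neq\varnothing$; (b) $h_\lambda f(x)=f(x)$ and $x\in\operatorname{dom}\partial h_\lambda f$; (c) $\operatorname{conv}(f+\lambda^{-1}j)(x)=(f+\lambda^{-1}j)(x)$ and $x\in\operatorname{dom}\partial[\operatorname{conv}(f+\lambda^{-1}j)]$.
   Context: $j:=\frac12\|\cdot\|^2$. $e_\lambda f(x):=\inf_y\{f(y)+\frac1{2\lambda}\|y-x\|^2\}$; prox-bounded with threshold $\lambda_f=\sup\{\lambda>0: e_\lambda f(x)>-\infty\text{ for some }x\}$. $\partial_p^\lambda f(x)$ is the set of $v$ with $f(y)\ge f(x)+\langle v,y-x\rangle-\frac1{2\lambda}\|y-x\|^2$ for all $y$. The $\lambda$-proximal hull is $h_\lambda f:=-e_\lambda(-e_\lambda f)$ (equivalently $(f+\lambda^{-1}j)^{**}-\lambda^{-1}j$). $\operatorname{conv}g$ denotes the convex hull of a function $g$ (largest convex function below $g$). $\partial$ is the limiting subdifferential. *)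

(* Defs.v *)
From HB Require Import structures.
From mathcomp Require Import all_boot all_order all_algebra.
From mathcomp Require Import all_classical all_reals all_analysis.
Set Implicit Arguments. Unset Strict Implicit. Unset Printing Implicit Defensive.
Import Order.TTheory GRing.Theory Num.Theory.
Import numFieldNormedType.Exports.
Local Open Scope classical_set_scope.
Local Open Scope ring_scope.

Section Defs.
Variables (R : realType) (n : nat).
Notation V := 'rV[R]_n.

Definition dotp (u v : V) : R := \sum_(i < n) u ord0 i * v ord0 i.
Definition sqnorm (u : V) : R := dotp u u.
Definition jq (u : V) : R := sqnorm u / 2.

Local Open Scope ereal_scope.

Definition proper_fun (f : V -> \bar R) : Prop :=
  (forall x, f x != -oo) /\ (exists x, f x < +oo).

Definition domf (f : V -> \bar R) : set V := [set x | f x < +oo].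

Definition moreau (lam : R) (f : V -> \bar R) (x : V) : \bar R :=
  ereal_inf [set f y + ((2 * lam)^-1 * sqnorm (y - x)%R)%:E | y in [set: V]].

Definition prox_bounded (f : V -> \bar R) : Prop :=
  exists lam : R, (0 < lam)%R /\ exists x, moreau lam f x > -oo.

Definition prox_threshold (f : V -> \bar R) : \bar R :=
  ereal_sup [set lam%:E | lam in [set lam : R | (0 < lam)%R /\
                                     exists x, moreau lam f x > -oo]].

Definition prox_subdiff (lam : R) (f : V -> \bar R) (x : V) : set V :=
  [set v | forall y, f y >= f x + (dotp v (y - x)
                                   - (2 * lam)^-1 * sqnorm (y - x))%:E].

Definition prox_hull (lam : R) (f : V -> \bar R) : V -> \bar R :=
  fun x => - moreau lam (fun y => - moreau lam f y) x.

Definition convex_efun (g : V -> \bar R) : Prop :=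
  forall (x y : V) (a b t : R), g x <= a%:E -> g y <= b%:E ->
    (0 <= t <= 1)%R ->
    g ((1 - t) *: x + t *: y)%R <= ((1 - t) * a + t * b)%:E.

Definition conv_hull (g : V -> \bar R) : V -> \bar R :=
  fun x => ereal_sup [set h x | h in [set h : V -> \bar R |
                          convex_efun h /\ forall y, h y <= g y]].

Definition frechet_subdiff (g : V -> \bar R) (x : V) : set V :=
  [set v | g x \is a fin_num /\
     forall eps : R, (0 < eps)%R -> exists2 delta : R, (0 < delta)%R &
       forall y, (sqnorm (y - x) < delta ^+ 2)%R ->
         g y >= g x + (dotp v (y - x) - eps * Num.sqrt (sqnorm (y - x)))%:E].

Definition limiting_subdiff (g : V -> \bar R) (x : V) : set V :=
  [set v | g x \is a fin_num /\
     exists (xs vs : nat -> V),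
       [/\ xs @ \oo --> x,
           (fun k => fine (g (xs k))) @ \oo --> fine (g x),
           (forall k, vs k \in frechet_subdiff g (xs k)) &
           vs @ \oo --> v]].

Definition dom_subdiff (g : V -> \bar R) : set V :=
  [set x | limiting_subdiff g x !=set0].

End Defs.

(* Main.v *)
Require Import Defs.
From HB Require Import structures.
From mathcomp Require Import all_boot all_order all_algebra.
From mathcomp Require Import all_classical all_reals all_analysis.
From mathcomp Require Import ring lra.
Import Order.TTheory GRing.Theory Num.Theory.
Import numFieldNormedType.Exports.
Local Open Scope classical_set_scope.
Local Open Scope ring_scope.

Section Alg.
Variables (R : realType) (n : nat).
Implicit Types (u v w : 'rV[R]_n).

Lemma dotpC u v : dotp u v = dotp v u.
Proof. by apply: eq_bigr => i _; rewrite mulrC. Qed.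

Lemma dotpDl u v w : dotp (u + v) w = dotp u w + dotp v w.
Proof. by rewrite /dotp -big_split; apply: eq_bigr => i _; rewrite !mxE mulrDl. Qed.

Lemma dotpZl (a : R) u w : dotp (a *: u) w = a * dotp u w.
Proof. by rewrite /dotp mulr_sumr; apply: eq_bigr => i _; rewrite !mxE mulrA. Qed.

Lemma dotpNl u w : dotp (- u) w = - dotp u w.
Proof. by rewrite -scaleN1r dotpZl mulN1r. Qed.

Lemma dotpBl u v w : dotp (u - v) w = dotp u w - dotp v w.
Proof. by rewrite dotpDl dotpNl. Qed.

Lemma dotpDr u v w : dotp w (u + v) = dotp w u + dotp w v.
Proof. by rewrite dotpC dotpDl !(dotpC w). Qed.

Lemma dotpZr (a : R) u w : dotp w (a *: u) = a * dotp w u.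
Proof. by rewrite dotpC dotpZl dotpC. Qed.

Lemma dotpBr u v w : dotp w (u - v) = dotp w u - dotp w v.
Proof. by rewrite dotpC dotpBl !(dotpC w). Qed.

Lemma sqnorm_ge0 u : 0 <= sqnorm u.
Proof. by apply: sumr_ge0 => i _; rewrite -expr2 sqr_ge0. Qed.

Lemma sqnormD u v : sqnorm (u + v) = sqnorm u + 2 * dotp u v + sqnorm v.
Proof. rewrite /sqnorm dotpDl !dotpDr (dotpC v u); ring. Qed.

Lemma sqnormB u v : sqnorm (u - v) = sqnorm u - 2 * dotp u v + sqnorm v.
Proof. rewrite /sqnorm dotpBl !dotpBr (dotpC v u); ring. Qed.

Lemma sqnormZ (a : R) u : sqnorm (a *: u) = a ^+ 2 * sqnorm u.
Proof. rewrite /sqnorm dotpZl dotpZr; ring. Qed.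

Lemma sqnormN u : sqnorm (- u) = sqnorm u.
Proof. by rewrite /sqnorm dotpNl dotpC dotpNl opprK. Qed.

Lemma sqnorm_sym u v : sqnorm (u - v) = sqnorm (v - u).
Proof. by rewrite -sqnormN opprB. Qed.

End Alg.
Lemma dotp_cvg (R : realType) n (xs ys : nat -> 'rV[R]_n) x y :
  xs @ \oo --> x -> ys @ \oo --> y ->
  (fun k => dotp (xs k) (ys k)) @ \oo --> dotp x y.
Proof.
move=> cx cy; rewrite /dotp.
have ac : continuous (fun z : R * R => z.1 + z.2) by exact: add_continuous.
have := (@cvg_big R 'I_n +%R 0 xpredT ac nat \oo (index_enum 'I_n)
   (fun i k => xs k ord0 i * ys k ord0 i) (fun i => x ord0 i * y ord0 i)).
apply => // i _.
apply: cvgM.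
  exact: (continuous_cvg _ (@coord_continuous R 1 n ord0 i x) cx).
exact: (continuous_cvg _ (@coord_continuous R 1 n ord0 i y) cy).
Qed.

Section Main.
Variables (R : realType) (n : nat).
Notation V := 'rV[R]_n.
Implicit Types (g : V -> \bar R).

Definition phi (c : R) (x v y : V) : R := dotp v (y - x) - c * sqnorm (y - x).

Definition semiconvex (c : R) g := forall (x y : V) (a b t : R),
  (g x <= a%:E)%E -> (g y <= b%:E)%E -> 0 <= t <= 1 ->
  (g ((1 - t) *: x + t *: y)%R <= ((1 - t) * a + t * b + c * (t * (1 - t)) * sqnorm (y - x))%:E)%E.

Lemma dotp0r (u : V) : dotp u 0 = 0.
Proof. by rewrite -(scale0r (0 : V)) dotpZr mul0r. Qed.

Lemma frechet_prox c g x v : 0 <= c -> semiconvex c g ->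
  frechet_subdiff g x v -> forall y, (g x + (phi c x v y)%:E <= g y)%E.
Proof.
move=> c0 sc [gxf fr] y.
set gx := fine (g x).
have gxE : g x = gx%:E by rewrite /gx fineK.
set d2 := sqnorm (y - x); set sd := Num.sqrt d2.
have d20 : 0 <= d2 by apply: sqnorm_ge0.
have sd0 : 0 <= sd by apply: sqrtr_ge0.
have sdE : sd ^+ 2 = d2 by rewrite sqr_sqrtr.
have key : forall b, (g y <= b%:E)%E -> gx + phi c x v y <= b.
  move=> b gyb; apply/ler_addgt0Pr => e e0.
  have sd1 : 0 < sd + 1 by lra.
  have eps0 : 0 < e / (sd + 1) by apply: divr_gt0.
  have [del del0 H] := fr _ eps0.
  set t := Num.min 1 (del / (sd + 1)).
  have t0 : 0 < t by rewrite /t lt_min ltr01 divr_gt0.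
  have t1 : t <= 1 by rewrite /t ge_min lexx.
  have tdel : t * (sd + 1) <= del.
    by rewrite -ler_pdivlMr // /t ge_min lexx orbT.
  have xt : (1 - t) *: x + t *: y - x = t *: (y - x).
    by apply/matrixP => i j; rewrite !mxE; ring.
  have Hsq : sqnorm ((1 - t) *: x + t *: y - x) < del ^+ 2.
    rewrite xt sqnormZ -/d2 -sdE.
    have h1 : t * sd < del by nra.
    have h2 : 0 <= t * sd by apply: mulr_ge0 => //; exact: ltW.
    rewrite -exprMn; nra.
  have := H _ Hsq; rewrite xt dotpZr sqnormZ -/d2.
  rewrite sqrtrM ?sqr_ge0 // sqrtr_sqr ger0_norm ?(ltW t0) // -/sd.
  have gxle : (g x <= gx%:E)%E by rewrite gxE.
  have t01 : 0 <= t <= 1 by rewrite (ltW t0) t1.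
  have := sc x y gx b t gxle gyb t01.
  move=> up lo; have := le_trans lo up.
  rewrite gxE -EFinD lee_fin /phi -/d2 => hh.
  set E' := e / (sd + 1) in hh.
  have E'E : E' * (sd + 1) = e by rewrite /E' divfK // gt_eqF.
  have tt0 : 0 <= t * t by rewrite mulr_ge0 // ltW.
  have ctd : 0 <= c * (t * t) * d2 by rewrite mulr_ge0 // mulr_ge0.
  have E'0 : 0 < E' by [].
  set dv := dotp v (y - x) in hh *.
  have tE : 0 < t * E' by apply: mulr_gt0.
  have tK : t * (gx + (dv - c * d2) - (b + e)) <= 0.
    have -> : t * (gx + (dv - c * d2) - (b + e)) = (gx + t * dv - E' * (t * sd)) - ((1 - t) * gx + t * b + c * (t * (1 - t)) * d2) - c * (t * t) * d2 - t * E'.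
      by rewrite -E'E; ring.
    lra.
  have : gx + (dv - c * d2) - (b + e) <= 0 by rewrite -(pmulr_rle0 _ t0).
  lra.
case E: (g y) => [s| |].
- by rewrite gxE -EFinD lee_fin; apply: key; rewrite E.
- by rewrite leey.
have h : (g y <= (gx + phi c x v y - 1)%:E)%E by rewrite E leNye.
exfalso; have := key _ h; lra.
Qed.

Lemma limiting_prox c g x v : 0 <= c -> semiconvex c g ->
  limiting_subdiff g x v -> forall y, (g x + (phi c x v y)%:E <= g y)%E.
Proof.
move=> c0 sc [gxf [xs [vs [cx cg fr cv]]]] y.
have P k := @frechet_prox c g (xs k) (vs k) c0 sc (set_mem (fr k)).
have fk k : g (xs k) \is a fin_num by have [] := set_mem (fr k).
case E: (g y) => [s| |]; last 2 first.
- by rewrite leey.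
- exfalso; have := P 0%N y; rewrite E -(fineK (fk 0%N)) leeNy_eq.
  by rewrite -EFinD.
rewrite -(fineK gxf) -EFinD lee_fin.
have Pk k : fine (g (xs k)) + phi c (xs k) (vs k) y <= s.
  by have := P k y; rewrite E -(fineK (fk k)) -EFinD lee_fin.
have cu : (fun k => fine (g (xs k)) + phi c (xs k) (vs k) y) @ \oo -->
          fine (g x) + phi c x v y.
  apply: cvgD => //; rewrite /phi.
  have cy : (fun k => y - xs k) @ \oo --> y - x by apply: cvgB => //; exact: cvg_cst.
  apply: cvgB; first exact: dotp_cvg.
  apply: cvgM; first exact: cvg_cst.
  exact: dotp_cvg.
rewrite leNgt; apply/negP => hs.
have [N _ hN] := cvgr_gt _ cu _ hs.
have := Pk N; have := hN N (leqnn N) => /=; lra.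
Qed.

Lemma prox_frechet c g x v : 0 <= c -> g x \is a fin_num ->
  (forall y, (g x + (phi c x v y)%:E <= g y)%E) -> frechet_subdiff g x v.
Proof.
move=> c0 gxf H; split => // eps eps0.
exists (eps / (c + 1)); first by apply: divr_gt0 => //; lra.
move=> y hy; apply: le_trans (H y); apply: leeD2l; rewrite lee_fin /phi lerD2l lerN2.
set d2 := sqnorm (y - x) in hy *; have d20 : 0 <= d2 by apply: sqnorm_ge0.
set s := Num.sqrt d2; have s0 : 0 <= s by apply: sqrtr_ge0.
have sE : d2 = s ^+ 2 by rewrite sqr_sqrtr.
set del := eps / (c + 1) in hy.
have delE : del * (c + 1) = eps by rewrite /del divfK // gt_eqF //; lra.
have del0 : 0 < del by rewrite /del divr_gt0 //; lra.
have sdel : s <= del.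
  rewrite sE in hy; rewrite leNgt; apply/negP => h.
  have : del * del < s * s by apply: ltr_pM => //; exact: ltW.
  rewrite -!expr2; lra.
rewrite sE -delE.
have h1 : 0 <= c * s * (del - s) by rewrite mulr_ge0 ?mulr_ge0 // subr_ge0.
have h2 : 0 <= del * s by rewrite mulr_ge0 // ltW.
nra.
Qed.

Lemma frechet_limiting g x v : frechet_subdiff g x v -> limiting_subdiff g x v.
Proof.
move=> fr; split; first by case: fr.
exists (fun _ => x), (fun _ => v); split; try exact: cvg_cst.
by move=> k; apply: mem_set.
Qed.

Lemma sq_identity (x y z : V) (t : R) :
  (1 - t) * sqnorm (z - x) + t * sqnorm (z - y) =
  t * (1 - t) * sqnorm (y - x) + sqnorm (z - ((1 - t) *: x + t *: y)).
Proof.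
have e1 : z - ((1 - t) *: x + t *: y) = (1 - t) *: (z - x) + t *: (z - y).
  by apply/matrixP => i j; rewrite !mxE; ring.
have e2 : y - x = (z - x) - (z - y).
  by apply/matrixP => i j; rewrite !mxE; ring.
rewrite e1 e2; move: (z - x) (z - y) => p q.
rewrite sqnormB sqnormD !sqnormZ dotpZl dotpZr; ring.
Qed.

Lemma ext1 (X : \bar R) (p q : R) : (- p%:E <= - X + q%:E)%E = (X <= (p + q)%:E)%E.
Proof.
case: X => [x||] /=.
- by rewrite -EFinD !lee_fin; apply/idP/idP => ?; lra.
- by [].
- by rewrite addye // leey leNye.
Qed.

Lemma ext2 (X : \bar R) (r : R) : (- (X - r%:E) = - X + r%:E)%E.
Proof. by case: X => [x||] //=; rewrite opprB addrC. Qed.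

Lemma conv_convex g : convex_efun (conv_hull g).
Proof.
move=> x y a b t hx hy t01; apply: ge_ereal_sup => _ [h [hc hg] <-].
apply: (hc) => //.
  by apply: le_trans _ hx; apply: ereal_sup_ubound; exists h.
by apply: le_trans _ hy; apply: ereal_sup_ubound; exists h.
Qed.

Lemma conv_le g y : (conv_hull g y <= g y)%E.
Proof. by apply: ge_ereal_sup => _ [h [hc hg] <-]. Qed.

Lemma conv_ge g h y : convex_efun h -> (forall z, (h z <= g z)%E) ->
  (h y <= conv_hull g y)%E.
Proof. by move=> hc hg; apply: ereal_sup_ubound; exists h. Qed.

Lemma conv_semiconvex g : semiconvex 0 (conv_hull g).
Proof.
move=> x y a b t hx hy t01; rewrite mul0r mul0r addr0.
exact: conv_convex.
Qed.

Section Hull.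
Variables (f : V -> \bar R) (lam : R).

Lemma moreau_le z w :
  (moreau lam f z <= f w + ((2 * lam)^-1 * sqnorm (w - z))%:E)%E.
Proof. by apply: ereal_inf_lbound; exists w. Qed.

Lemma moreau_ge z b :
  (forall w, (b%:E <= f w + ((2 * lam)^-1 * sqnorm (w - z))%:E)%E) ->
  (b%:E <= moreau lam f z)%E.
Proof. by move=> H; apply: le_ereal_inf_tmp => _ [w _ <-]. Qed.

Lemma hull_le y a : (prox_hull lam f y <= a%:E)%E <->
  forall z, (moreau lam f z <= (a + (2 * lam)^-1 * sqnorm (z - y))%:E)%E.
Proof.
rewrite /prox_hull leeNl; split.
  move=> h z; rewrite -ext1; apply: le_trans h _.
  by apply: ereal_inf_lbound; exists z.
by move=> H; apply: le_ereal_inf_tmp => _ [z _ <-]; rewrite ext1.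
Qed.

Lemma hull_ge y z :
  (moreau lam f z - ((2 * lam)^-1 * sqnorm (z - y))%:E <= prox_hull lam f y)%E.
Proof.
rewrite /prox_hull leeNr ext2; apply: ereal_inf_lbound; exists z => //.
Qed.

Lemma hull_semiconvex : semiconvex ((2 * lam)^-1) (prox_hull lam f).
Proof.
move=> x y a b t hx hy /andP[t0 t1]; apply/hull_le => z.
have := (hull_le x a).1 hx z; have := (hull_le y b).1 hy z.
set c := (2 * lam)^-1.
have -> : (1 - t) * a + t * b + c * (t * (1 - t)) * sqnorm (y - x) +
   c * sqnorm (z - ((1 - t) *: x + t *: y)) =
   (1 - t) * (a + c * sqnorm (z - x)) + t * (b + c * sqnorm (z - y)).
  have -> : sqnorm (z - ((1 - t) *: x + t *: y)) = (1 - t) * sqnorm (z - x) + t * sqnorm (z - y) - t * (1 - t) * sqnorm (y - x).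
    by rewrite (sq_identity x y z t); ring.
  ring.
case: (moreau lam f z) => [m| |] //=; rewrite ?lee_fin => h2 h1.
have u1 : 0 <= (1 - t) * (a + c * sqnorm (z - x) - m) by rewrite mulr_ge0 // subr_ge0.
have u2 : 0 <= t * (b + c * sqnorm (z - y) - m) by rewrite mulr_ge0 // subr_ge0.
nra.
by rewrite leNye.
Qed.

Lemma hull_le_f y : f y != -oo%E -> (prox_hull lam f y <= f y)%E.
Proof.
case E: (f y) => [s| |] // _; last by rewrite leey.
by apply/hull_le => z; have := moreau_le z y; rewrite E -EFinD sqnorm_sym.
Qed.

End Hull.

Lemma key_identity (lam : R) (x y v : V) : lam != 0 ->
  lam^-1 * jq x + dotp (v + lam^-1 *: x) (y - x) - lam^-1 * jq y =
  phi ((2 * lam)^-1) x v y.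
Proof.
move=> l0; have ey : y = x + (y - x) by rewrite addrC subrK.
rewrite /phi [in jq y]ey; move: (y - x) => p.
rewrite /jq sqnormD dotpDl dotpZl; field.
by rewrite l0.
Qed.

Lemma phi_xx c (x v : V) : phi c x v x = 0.
Proof. by rewrite /phi subrr dotp0r /sqnorm dotp0r mulr0 subrr. Qed.

Variables (f : V -> \bar R) (lam : R) (x : V).
Hypothesis fprop : forall y, f y != -oo%E.
Hypothesis fxf : f x \is a fin_num.
Hypothesis lam0 : 0 < lam.

Local Notation c := ((2 * lam)^-1).
Let c0 : 0 <= c.
Proof. by rewrite invr_ge0 mulr_ge0 // ltW. Qed.
Local Notation F := (fine (f x)).
Let fxE : f x = F%:E.
Proof. by rewrite fineK. Qed.
Let lamn0 : lam != 0.
Proof. by rewrite gt_eqF. Qed.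

Lemma a_to_b v : prox_subdiff lam f x v ->
  prox_hull lam f x = f x /\ limiting_subdiff (prox_hull lam f) x v.
Proof.
move=> Hv.
set z0 := x + lam *: v.
have I w : phi c x v w + c * sqnorm (w - z0) = lam * sqnorm v / 2.
  have e : w - z0 = (w - x) - lam *: v by apply/matrixP => i j; rewrite !mxE; ring.
  rewrite /phi e; move: (w - x) => p.
  rewrite sqnormB sqnormZ dotpZr (@dotpC _ _ p v); field.
  by rewrite lamn0.
have ez0 : ((F + lam * sqnorm v / 2)%:E <= moreau lam f z0)%E.
  apply: moreau_ge => w; have := Hv w; rewrite /prox_subdiff /=.
  case E: (f w) => [s| |].
  - rewrite fxE -!EFinD !lee_fin; have := I w; rewrite /phi; lra.
  - by move=> _; rewrite addye // leey.
  - by have := fprop w; rewrite E.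
have lower y : ((F + phi c x v y)%:E <= prox_hull lam f y)%E.
  apply: le_trans (hull_ge f lam y z0).
  apply: le_trans (leeB ez0 (lexx _)).
  rewrite -EFinB lee_fin sqnorm_sym; have := I y; lra.
have hx : prox_hull lam f x = f x.
  apply/le_anti/andP; split; first exact: hull_le_f.
  by have := lower x; rewrite phi_xx addr0 fxE.
split => //; apply: frechet_limiting; apply: (@prox_frechet c) => //.
  by rewrite hx fxE.
by move=> y; rewrite hx fxE -EFinD; apply: lower.
Qed.

Lemma b_to_a v : prox_hull lam f x = f x ->
  limiting_subdiff (prox_hull lam f) x v -> prox_subdiff lam f x v.
Proof.
move=> hx Hv y.
have := @limiting_prox c _ _ _ c0 (hull_semiconvex f lam) Hv y.
rewrite hx => h; apply: le_trans h _; exact: hull_le_f.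
Qed.

Local Notation fj := (fun y => f y + (lam^-1 * jq y)%:E)%E.
Local Notation K := (F + lam^-1 * jq x).

Lemma a_to_c v : prox_subdiff lam f x v ->
  conv_hull fj x = fj x /\ limiting_subdiff (conv_hull fj) x (v + lam^-1 *: x).
Proof.
move=> Hv; set w := v + lam^-1 *: x.
set al := fun y => (K + dotp w (y - x))%:E.
have alc : convex_efun al.
  move=> x1 y1 a b t; rewrite /al !lee_fin => h1 h2 /andP[t0 t1].
  have -> : (1 - t) *: x1 + t *: y1 - x = (1 - t) *: (x1 - x) + t *: (y1 - x).
    by apply/matrixP => i j; rewrite !mxE; ring.
  rewrite dotpDr !dotpZr.
  have u1 : 0 <= (1 - t) * (a - (K + dotp w (x1 - x))) by rewrite mulr_ge0 // subr_ge0.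
  have u2 : 0 <= t * (b - (K + dotp w (y1 - x))) by rewrite mulr_ge0 // subr_ge0.
  nra.
have alfj y : (al y <= fj y)%E.
  rewrite /al /fj; have := Hv y; rewrite /prox_subdiff /=.
  case E: (f y) => [s| |].
  - rewrite fxE -!EFinD !lee_fin; have := key_identity lam x y v lamn0.
    rewrite -/w /phi; lra.
  - by move=> _; rewrite addye // leey.
  - by have := fprop y; rewrite E.
have fjx : fj x = K%:E by rewrite /fj fxE -EFinD.
have alx : al x = K%:E by rewrite /al subrr dotp0r addr0.
have Gx : conv_hull fj x = fj x.
  apply/le_anti/andP; split; first exact: conv_le.
  by rewrite fjx -alx; apply: conv_ge.
split => //; apply: frechet_limiting; apply: (@prox_frechet 0) => //.
  by rewrite Gx fjx.
move=> y; rewrite Gx fjx -EFinD /phi mul0r subr0.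
exact: (@conv_ge fj al y alc alfj).
Qed.

Lemma c_to_a w : conv_hull fj x = fj x ->
  limiting_subdiff (conv_hull fj) x w -> prox_subdiff lam f x (w - lam^-1 *: x).
Proof.
move=> Gx Hw y.
have := le_trans (@limiting_prox 0 _ _ _ (lexx 0) (conv_semiconvex fj) Hw y) (conv_le fj y).
rewrite Gx /fj fxE /phi mul0r subr0.
case E: (f y) => [s| |].
- rewrite -!EFinD !lee_fin; have := key_identity lam x y (w - lam^-1 *: x) lamn0.
  rewrite subrK /phi; lra.
  - by move=> _; rewrite leey.
- by have := fprop y; rewrite E.
Qed.

End Main.

Theorem mainTheorem5 (R : realType) (n : nat) (f : 'rV[R]_n -> \bar R)
    (lam : R) (x : 'rV[R]_n) :
  proper_fun f -> lower_semicontinuous f -> prox_bounded f ->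
  (0%E < prox_threshold f)%E ->
  0 < lam -> (lam%:E < prox_threshold f)%E ->
  x \in domf f ->
  let fj := fun y => (f y + (lam^-1 * jq y)%:E)%E in
  [/\ prox_subdiff lam f x !=set0 <->
        (prox_hull lam f x = f x /\ x \in dom_subdiff (prox_hull lam f)),
      prox_subdiff lam f x !=set0 <->
        (conv_hull fj x = fj x /\ x \in dom_subdiff (conv_hull fj)) &
      (prox_hull lam f x = f x /\ x \in dom_subdiff (prox_hull lam f)) <->
        (conv_hull fj x = fj x /\ x \in dom_subdiff (conv_hull fj))].
Proof.
move=> [fprop _] _ _ _ lam0 _ /set_mem xdom fj.
have fxf : f x \is a fin_num.
  by rewrite fin_numE fprop /= lt_eqF.
have AB : prox_subdiff lam f x !=set0 <->
        (prox_hull lam f x = f x /\ x \in dom_subdiff (prox_hull lam f)).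
  split.
    move=> [v Hv]; have [hx Hl] := @a_to_b _ _ f lam x fprop fxf lam0 v Hv.
    by split => //; apply: mem_set; exists v.
  move=> [hx /set_mem [v Hv]]; exists v; exact: (@b_to_a _ _ f lam x fprop lam0 v hx Hv).
have AC : prox_subdiff lam f x !=set0 <->
        (conv_hull fj x = fj x /\ x \in dom_subdiff (conv_hull fj)).
  split.
    move=> [v Hv]; have [hx Hl] := @a_to_c _ _ f lam x fprop fxf lam0 v Hv.
    by split => //; apply: mem_set; exists (v + lam^-1 *: x).
  move=> [hx /set_mem [w Hw]]; exists (w - lam^-1 *: x).
  exact: (@c_to_a _ _ f lam x fprop fxf lam0 w hx Hw).
split => //; exact: iff_trans (iff_sym AB) AC.
Qed.
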